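(* Let $\mathbf c^*=(c^*_1,\ldots,c^*_K)$ be such that $(\mathbf 0,\mathbf c^* )\in\mathcal A_K(\alpha_0)$, and let $\gamma$ be the common marginal size $\gamma=\omega(c_0,\sigma_{1,k},\nu_2,0,c_k^* )$, $k=1,\ldots,K$. Then $\gamma\ge\alpha_0$.
   Context: Multivariate setting. Fix an integer $K\ge2$, $c_0>0$, $\alpha_0\in(0,1/2)$, $\nu_2>0$, and a positive definite $K\times K$ matrix $\Sigma_1$ with diagonal entries $\sigma_{1,k}^2$. Let $\widehat{\boldsymbol\theta}\sim\mathcal N_K(\boldsymbol\theta,\Sigma_1)$ and $\widehat\Sigma_1$ be independent with $\nu_2\widehat\Sigma_1\sim W_K(\Sigma_1,\nu_2)$ (Wishart), and let $\widehat\sigma_{1,k}$ be the square root of the $k$th diagonal entry of $\widehat\Sigma_1$. For $\mathbf t\in[0,\infty)^K$, $\mathbf c\in(0,\infty)^K$ define $$\omega_K(\boldsymbol\theta,\Sigma_1,\nu_2,\mathbf t,\mathbf c)=\Pr\Big(\bigcap_{k=1}^K\{t_k\widehat\sigma_{1,k}-c_k<\widehat\theta_k<c_k-t_k\widehat\sigma_{1,k}\}\Big).$$ The marginal (univariate) rejection probability is $\omega(\theta,s,\nu_2,t,c)=\Pr(t\widehat\sigma-c<\widehat\theta<c-t\widehat\sigma)$ for independent $\widehat\theta\sim\mathcal N(\theta,s^2)$, $\nu_2\widehat\sigma^2/s^2\sim\chi^2_{\nu_2}$. Define $\mathcal A_K(\alpha_0)$ as the set of pairs $(\mathbf t,\mathbf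 c)$ with $\mathbf t\in[0,\infty)^K$, $\mathbf c\in(0,\infty)^K$, $\sup_{\boldsymbol\theta\notin(-c_0,c_0)^K}\omega_K(\boldsymbol\theta,\Sigma_1,\nu_2,\mathbf t,\mathbf c)=\alpha_0$, and $\omega(c_0,\sigma_{1,1},\nu_2,t_1,c_1)=\cdots=\omega(c_0,\sigma_{1,K},\nu_2,t_K,c_K)$ (equal marginal sizes). *)

(* Defs.v *)
From HB Require Import structures.
From mathcomp Require Import all_boot all_order all_algebra.
From mathcomp Require Import all_classical all_reals all_analysis.
Set Implicit Arguments. Unset Strict Implicit. Unset Printing Implicit Defensive.
Import Order.TTheory GRing.Theory Num.Theory.
Local Open Scope classical_set_scope.
Local Open Scope ring_scope.

Section Defs.
Variable R : realType.

Definition chi2_unnorm (nu u : R) : R := u `^ (nu / 2 - 1) * expR (- u / 2).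
Definition chi2_const (nu : R) : R :=
  fine (\int[@lebesgue_measure R]_(u in `]0%R, +oo[) (chi2_unnorm nu u)%:E)%E.
Definition chi2_pdf (nu u : R) : R := chi2_unnorm nu u / chi2_const nu.

(* univariate rejection probability
   omega(theta,s,nu,t,c) = Pr(t sh - c < thh < c - t sh),
   thh ~ N(theta, s^2), nu sh^2 / s^2 = U ~ chi2_nu, independent;
   i.e. sh = s * sqrt(U/nu), integrated against the chi2 law of U. *)
Definition omega1 (theta s nu t c : R) : R :=
  fine (\int[@lebesgue_measure R]_(u in `]0%R, +oo[)
     ((chi2_pdf nu u)%:E *
      normal_prob theta s
        `](t * (s * Num.sqrt (u / nu)) - c)%R, (c - t * (s * Num.sqrt (u / nu)))%R[%classic))%E.

Definition qform (K : nat) (M : 'M[R]_K) (x : 'I_K -> R) : R :=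
  \sum_(i < K) \sum_(j < K) x i * M i j * x j.

Definition posdef (K : nat) (M : 'M[R]_K) : Prop :=
  M^T = M /\ forall x : 'I_K -> R, (exists k, x k != 0) -> 0 < qform M x.

Definition psd (K : nat) (M : 'M[R]_K) : Prop :=
  M^T = M /\ forall x : 'I_K -> R, 0 <= qform M x.

Context {d : measure_display} {Omega : measurableType d}.
Variable P : probability Omega R.

(* Z = (Z_k) is N_K(0, Sigma) (Cramer-Wold definition: every nonzero linear
   combination a^T Z is N(0, a^T Sigma a)). *)
Definition mvnormal0 (K : nat) (Z : 'I_K -> Omega -> R) (Sigma : 'M[R]_K) : Prop :=
  (forall k, measurable_fun setT (Z k)) /\
  forall a : 'I_K -> R, (exists k, a k != 0) ->
    forall A : set R, measurable A ->
      P ((fun w => \sum_(k < K) a k * Z k w) @^-1` A) =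
      normal_prob 0 (Num.sqrt (qform Sigma a)) A.

Definition indep_vec_mx (K : nat) (Z : 'I_K -> Omega -> R)
    (S : 'I_K -> 'I_K -> Omega -> R) : Prop :=
  forall (A : 'I_K -> set R) (B : 'I_K -> 'I_K -> set R),
    (forall k, measurable (A k)) -> (forall i j, measurable (B i j)) ->
    let EZ := [set w | forall k, A k (Z k w)] in
    let ES := [set w | forall i j, B i j (S i j w)] in
    P (EZ `&` ES) = (P EZ * P ES)%E.

(* W ~ W_K(Sigma, nu): W is a.s. symmetric positive semidefinite and has
   Laplace transform E[exp(-tr(T W))] = det(I + 2 Sigma T)^(-nu/2)
   for every symmetric positive semidefinite T. *)
Definition wishart (K : nat) (W : Omega -> 'M[R]_K) (Sigma : 'M[R]_K) (nu : R) : Prop :=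
  (forall i j, measurable_fun setT (fun w => W w i j)) /\
  P [set w | psd (W w)] = 1%E /\
  forall T : 'M[R]_K, psd T ->
    (\int[P]_w (expR (- \tr (T *m W w)))%:E)%E =
    (powR (\det (1%:M + 2%:R *: (Sigma *m T))) (- (nu / 2)))%:E.

(* The multivariate probability omega_K(theta, Sigma1, nu2, t, c), where
   thetahat = theta + Z with Z ~ N_K(0,Sigma1) and Sigmahat = S. *)
Definition omegaK (K : nat) (Z : 'I_K -> Omega -> R) (S : 'I_K -> 'I_K -> Omega -> R)
    (theta t c : 'I_K -> R) : R :=
  fine (P [set w | forall k,
     t k * Num.sqrt (S k k w) - c k < theta k + Z k w /\
     theta k + Z k w < c k - t k * Num.sqrt (S k k w)]).

Definition in_AK (K : nat) (Z : 'I_K -> Omega -> R) (S : 'I_K -> 'I_K -> Omega -> R)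
    (Sigma1 : 'M[R]_K) (nu2 c0 alpha0 : R) (t c : 'I_K -> R) : Prop :=
  (forall k, 0 <= t k) /\ (forall k, 0 < c k) /\
  sup [set omegaK Z S theta t c | theta in [set theta | exists k, c0 <= `|theta k|]]
    = alpha0 /\
  (forall k l, omega1 c0 (Num.sqrt (Sigma1 k k)) nu2 (t k) (c k) =
               omega1 c0 (Num.sqrt (Sigma1 l l)) nu2 (t l) (c l)).

End Defs.

(* Main.v *)
Require Import Defs.
From HB Require Import structures.
From mathcomp Require Import all_boot all_order all_algebra.
From mathcomp Require Import all_classical all_reals all_analysis.
From mathcomp Require Import ring lra measurable_realfun normal_distribution.
Import Order.TTheory GRing.Theory Num.Theory numFieldNormedType.Exports.
Local Open Scope classical_set_scope.
Local Open Scope ring_scope.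

Section Helpers.
Context {R : realType}.
Local Notation mu := (@lebesgue_measure R).

Lemma derivable_cont (F : R -> R) (x : R) : derivable F x 1 -> F @ x --> F x.
Proof. by move=> /derivable1_diffP /differentiable_continuous. Qed.

Lemma FTC_oo (f F : R -> R) a b : a < b -> continuous f ->
  (forall x, derivable F x 1) -> (forall x, (F^`())%classic x = f x) ->
  (\int[mu]_(x in `]a, b[) (f x)%:E = (F b - F a)%:E)%E.
Proof.
move=> ab cf dF F'f.
rewrite -(@integral_itv_bndoo _ _ _ _ true false); last first.
  apply/measurable_EFinP; apply: measurable_funS (continuous_measurable_fun cf) => //.
rewrite EFinB; apply: continuous_FTC2 => //.
- exact: continuous_subspaceT.
- split.
  + by move=> x _; exact: dF.
  + by apply: cvg_at_right_filter; apply: derivable_cont.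
  + by apply: cvg_at_left_filter; apply: derivable_cont.
Qed.



Lemma derivable_comp1 (f g : R -> R) (x : R) :
  derivable f x 1 -> derivable g (f x) 1 -> derivable (g \o f) x 1.
Proof.
move=> /derivable1_diffP df /derivable1_diffP dg; apply/derivable1_diffP.
exact: differentiable_comp.
Qed.

Lemma derivable_shift (m x : R) : derivable (fun y : R => y - m) x 1.
Proof.
have -> : (fun y : R => y - m) = (id - cst m)%R by apply/funext => y.
apply: derivableB; [exact: derivable_id|exact: derivable_cst].
Qed.

Lemma derive1_shift (m x : R) : (fun y : R => y - m)^`()%classic x = 1.
Proof.
have -> : (fun y : R => y - m) = (id - cst m)%R by apply/funext => y.
rewrite derive1E deriveB; [|exact: derivable_id|exact: derivable_cst].
by rewrite derive_id derive_cst subr0.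
Qed.

Definition Phi (s x : R) : R := (\int[mu]_(t in `]-oo, x]) (normal_pdf 0 s t))%R.

Lemma pdf_shift (m s x : R) : s != 0 -> normal_pdf m s x = normal_pdf 0 s (x - m).
Proof. by move=> s0; rewrite !normal_pdfE // /normal_fun subr0. Qed.

Lemma Phi_der (s x : R) : s != 0 ->
  derivable (Phi s) x 1 /\ (Phi s)^`()%classic x = normal_pdf 0 s x.
Proof.
move=> s0.
apply: (@continuous_FTC1 _ _ -oo%O x (x + 1)).
- by rewrite ltrDl.
- apply: (@integrableS _ _ _ _ setT) => //.
  exact: integrable_normal_pdf.
- by rewrite ltNyr.
- exact: continuous_normal_pdf.
Qed.

Lemma normal_prob_itv (m s a b : R) : s != 0 -> a < b ->
  normal_prob m s `]a, b[ = (Phi s (b - m) - Phi s (a - m))%:E.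
Proof.
move=> s0 ab; rewrite /normal_prob.
apply: (@FTC_oo _ (fun x => Phi s (x - m))) => //.
- exact: continuous_normal_pdf.
- move=> x; apply: (@derivable_comp1 (fun y => y - m) (Phi s)).
    exact: derivable_shift.
  by case: (Phi_der s (x - m) s0).
- move=> x; rewrite (@derive1_comp _ (fun y => y - m) (Phi s)).
  + rewrite derive1_shift mulr1; have [_ ->] := Phi_der s (x - m) s0; by rewrite (pdf_shift m s x s0).
  + exact: derivable_shift.
  + by case: (Phi_der s (x - m) s0).
Qed.

Lemma pdf_even (s x : R) : s != 0 -> normal_pdf 0 s (- x) = normal_pdf 0 s x.
Proof. by move=> s0; rewrite !normal_pdfE // /normal_fun !subr0 sqrrN. Qed.

Lemma derivable_refl (g : R -> R) (k x : R) : (forall y, derivable g y 1) ->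
  derivable (fun t => g (k - t)) x 1.
Proof.
move=> dg; have -> : (fun t => g (k - t)) = g \o (cst k - id)%R by apply/funext.
apply: derivable_comp1; last exact: dg.
apply: derivableB; [exact: derivable_cst|exact: derivable_id].
Qed.

Lemma derive1_refl (g : R -> R) (k x : R) : (forall y, derivable g y 1) ->
  (fun t => g (k - t))^`()%classic x = - (g^`()%classic (k - x)).
Proof.
move=> dg; have -> : (fun t => g (k - t)) = g \o (cst k - id)%R by apply/funext.
rewrite derive1_comp; last 2 first.
- by apply: derivableB; [exact: derivable_cst|exact: derivable_id].
- exact: dg.
rewrite [X in _ * X]derive1E deriveB; [|exact: derivable_cst|exact: derivable_id].
by rewrite derive_id derive_cst sub0r mulrN1.
Qed.

Lemma Phi_sym (s x : R) : s != 0 -> Phi s x + Phi s (- x) = Phi s 0 + Phi s 0.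
Proof.
move=> s0.
have dP y : derivable (Phi s) y 1 by case: (Phi_der s y s0).
pose H := fun t => Phi s t + Phi s (0 - t).
have dH y : derivable H y 1.
  by apply: derivableD => //; apply: derivable_refl.
have := @is_derive_0_is_cst _ H x 0.
rewrite /H !sub0r oppr0; apply => y.
have := derivableP (dH y).
suff -> : 'D_1 H y = 0 by [].
rewrite -derive1E /H.
have -> : (fun t => Phi s t + Phi s (0 - t)) = (Phi s + (fun t => Phi s (0 - t)))%R by apply/funext.
rewrite derive1E deriveD //; last exact: derivable_refl.
rewrite -!derive1E derive1_refl //.
have [_ ->] := Phi_der s y s0; have [_ ->] := Phi_der s (0 - y) s0.
by rewrite sub0r pdf_even // subrr.
Qed.

Definition G (s c t : R) := Phi s (c - t) - Phi s (- c - t).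

Lemma G_even (s c t : R) : s != 0 -> G s c (- t) = G s c t.
Proof.
move=> s0; rewrite /G.
have h1 := Phi_sym s (c - - t) s0.
have h2 := Phi_sym s (c - t) s0.
have e1 : - (c - - t) = - c - t by ring.
have e2 : - c - - t = - (c - t) by ring.
rewrite e1 in h1; rewrite e2; lra.
Qed.

Lemma pdf_le (s x y : R) : s != 0 -> x ^+ 2 <= y ^+ 2 -> normal_pdf 0 s y <= normal_pdf 0 s x.
Proof.
move=> s0 xy; rewrite !normal_pdfE //; apply: ler_wpM2l; first exact: normal_peak_ge0.
rewrite /normal_fun ler_expR !subr0 !mulNr lerN2; apply: ler_wpM2r => //.
by rewrite invr_ge0 mulrn_wge0 // sqr_ge0.
Qed.

Lemma G_mono (s c a b : R) : s != 0 -> 0 < c -> 0 <= a -> a <= b -> G s c b <= G s c a.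
Proof.
move=> s0 c0 a0 ab.
have dP y : derivable (Phi s) y 1 by case: (Phi_der s y s0).
have dG y : derivable (G s c) y 1.
  by apply: derivableB; apply: derivable_refl.
apply: (@ler0_derive1_nincr _ (G s c) a b) => //.
- move=> x /[!in_itv] /andP[ax xb] /=.
  rewrite /G.
  have -> : (fun t => Phi s (c - t) - Phi s (- c - t)) =
    ((fun t => Phi s (c - t)) - (fun t => Phi s (- c - t)))%R by apply/funext.
  rewrite derive1E deriveB; [|exact: derivable_refl|exact: derivable_refl].
  rewrite -!derive1E !derive1_refl //.
  have [_ ->] := Phi_der s (c - x) s0; have [_ ->] := Phi_der s (- c - x) s0.
  rewrite subr_le0 lerN2 -opprD pdf_even //; apply: pdf_le => //.
  have x0 : 0 < x by exact: le_lt_trans ax.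
  nra.
- apply: continuous_subspaceT => x; exact: derivable_cont.
Qed.

Lemma normal_cmp (s c c0 th : R) : s != 0 -> 0 < c -> 0 < c0 -> c0 <= `|th| ->
  fine (normal_prob 0 s `]- c - th, c - th[) <= fine (normal_prob c0 s `]- c, c[).
Proof.
move=> s0 cp c0p hth.
rewrite !normal_prob_itv //; try lra.
rewrite /= !subr0.
have -> : Phi s (c - th) - Phi s (- c - th) = G s c th by [].
have -> : Phi s (c - c0) - Phi s (- c - c0) = G s c c0 by [].
have [th0|th0] := leP 0 th.
  by apply: G_mono => //; [exact: ltW|rewrite -(ger0_norm th0)].
rewrite -G_even //; apply: G_mono => //; first exact: ltW.
by rewrite -(ltr0_norm th0).
Qed.



Lemma powR_cont (a x : R) : 0 < x -> {for x, continuous (@powR R ^~ a)}.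
Proof.
move=> x0; apply: derivable_cont; apply: derivable_powR.
by rewrite in_itv /= x0.
Qed.

Lemma mpow (a : R) (D : set R) : measurable_fun D (fun x : R => (x `^ a)%:E).
Proof.
apply/measurable_EFinP.
exact: (measurable_funS measurableT (@subsetT _ D) (measurable_powR a)).
Qed.

Lemma int_pow_seg (a e : R) : -1 < a -> 0 < e -> e < 1 ->
  (\int[mu]_(x in `[e, 1%R[) (x `^ a)%:E <= ((a + 1)^-1)%:E)%E.
Proof.
move=> a1 e0 e1.
have a10 : 0 < a + 1 by lra.
rewrite integral_itv_bndo_bndc; last exact: mpow.
have h : (\int[mu]_(x in `[e, 1%R]) ((a + 1) * x `^ a)%:E =
          (1 `^ (a + 1))%:E - (e `^ (a + 1))%:E)%E.
  apply: (continuous_FTC2 (F := fun x : R => x `^ (a + 1))) => //.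
  - apply: continuous_in_subspaceT => x /[!inE] /= /[!in_itv] /= /andP[ex _].
    apply: cvgM; first exact: cvg_cst.
    by apply: powR_cont; lra.
  - split.
    + move=> x /[!in_itv] /= /andP[ex _]; apply: derivable_powR.
      by rewrite in_itv /= andbT; lra.
    + by apply: cvg_at_right_filter; apply: powR_cont.
    + by apply: cvg_at_left_filter; apply: powR_cont.
  - move=> x /[!in_itv] /= /andP[ex _]; rewrite powR_derive1 ?addrK //.
    by rewrite in_itv /= andbT; lra.
have -> : (\int[mu]_(x in `[e, 1%R]) (x `^ a)%:E =
   \int[mu]_(x in `[e, 1%R]) (((a + 1)^-1)%:E * ((a + 1) * x `^ a)%:E))%E.
  apply: eq_integral => x _; rewrite -EFinM mulrA mulVf ?mul1r //; lra.
rewrite ge0_integralZl_EFin //; last 3 first.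
- by move=> x _; rewrite lee_fin mulr_ge0 ?powR_ge0 //; lra.
- apply/measurable_EFinP; apply: measurable_funM => //.
  exact: (measurable_funS measurableT (@subsetT _ _) (measurable_powR a)).
- by rewrite invr_ge0; lra.
rewrite h -EFinB -EFinM lee_fin powR1 ler_piMr ?invr_ge0 ?gerBl ?powR_ge0 //; lra.
Qed.

Lemma int01_fin (a : R) : -1 < a ->
  (\int[mu]_(x in `]0%R, 1%R[) (x `^ a)%:E < +oo)%E.
Proof.
move=> a1.
pose F : (set R)^nat := fun n => `[(n.+2%:R)^-1, 1%R[%classic.
have nd : nondecreasing_seq F.
  move=> n m nm; apply/subsetPset => x; rewrite /F /= !in_itv /= => /andP[h1 h2].
  rewrite h2 andbT; apply: le_trans h1.
  by rewrite lef_pV2 ?posrE // ler_nat ltnS ltnS.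
have mF n : measurable (F n) by rewrite /F; exact: measurable_itv.
have U : \bigcup_n F n = `]0%R, 1%R[%classic.
  apply/seteqP; split.
  - move=> x [n _]; rewrite /F /= !in_itv /= => /andP[h1 h2].
    by rewrite h2 andbT; apply: lt_le_trans h1.
  - move=> x; rewrite /= in_itv /= => /andP[x0 x1].
    exists (Num.truncn x^-1) => //; rewrite /F /= in_itv /= x1 andbT.
    rewrite -[X in _ <= X](invrK x) lef_pV2 ?posrE ?invr_gt0 //.
    apply: ltW; apply: lt_le_trans (truncnS_gt _) _.
    by rewrite ler_nat.
have f0 : forall n x, F n x -> (0 <= (x `^ a)%:E)%E.
  by move=> n x _; rewrite lee_fin powR_ge0.
have h := @ge0_nondecreasing_set_cvg_integral _ (measurableTypeR R) R F (fun x => (x `^ a)%:E) lebesgue_measure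
  nd mF (fun n => mpow a (F n)) f0.
rewrite U in h.
rewrite -(cvg_lim _ h) //.
apply: (@le_lt_trans _ _ ((a + 1)^-1)%:E); last exact: ltry.
apply: lime_le; first by apply/cvg_ex; eexists; exact: h.
apply: nearW => n; rewrite /F; apply: int_pow_seg => //.
  by rewrite invf_lt1 // ltr1n.
Qed.

Definition Cb (a : R) : R := 4 ^+ (Num.truncn a).+1 * ((Num.truncn a).+1)`!%:R.

Lemma Cb_ge0 (a : R) : 0 <= Cb a.
Proof. by rewrite /Cb mulr_ge0 // exprn_ge0. Qed.

Lemma pow_exp_bound (a u : R) : 1 <= u ->
  u `^ a * expR (- u / 2) <= Cb a * expR (- u / 4).
Proof.
move=> u1; set m := Num.truncn a.
have u0 : 0 <= u by lra.
have h1 : u `^ a <= u ^+ m.+1.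
  rewrite -powR_mulrn //; apply: ler_powR => //.
  exact/ltW/truncnS_gt.
have h2 : (u / 4) ^+ m.+1 <= (m.+1)`!%:R * expR (u / 4).
  have := @expR_ge1Dxn R (u / 4) m ltac:(lra).
  have f0 : (0 : R) < (m.+1)`!%:R by rewrite ltr0n fact_gt0.
  rewrite -ler_pdivrMl // mulrC.
  have := exprn_ge0 m.+1 (ltac:(lra) : 0 <= u / 4).
  have : 0 <= ((u / 4) ^+ m.+1) / (m.+1)`!%:R by rewrite divr_ge0 // ?exprn_ge0 //; lra.
  lra.
have h3 : u ^+ m.+1 = 4 ^+ m.+1 * (u / 4) ^+ m.+1.
  by rewrite -exprMn; congr (_ ^+ _); field.
apply: (@le_trans _ _ ((4 ^+ m.+1 * ((m.+1)`!%:R * expR (u / 4))) * expR (- u / 2))).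
  apply: ler_wpM2r; first exact: expR_ge0.
  apply: (le_trans h1); rewrite h3; apply: ler_wpM2l => //.
rewrite /Cb -/m (_ : expR (- u / 4) = expR (u / 4) * expR (- u / 2)).
  by rewrite !mulrA.
by rewrite -expRD; congr expR; field.
Qed.

Lemma mg (a : R) (D : set R) : measurable_fun D (fun u : R => (u `^ a * expR (- u / 2))%:E).
Proof.
apply/measurable_EFinP; apply: measurable_funM.
  exact: (measurable_funS measurableT (@subsetT _ D) (measurable_powR a)).
apply: (measurable_funS measurableT (@subsetT _ D)).
apply: measurableT_comp; first exact: measurable_expR.
apply: measurable_funM => //; exact: measurable_funN.
Qed.

Lemma tail_fin (a : R) :
  (\int[mu]_(u in `[1%R, +oo[) (u `^ a * expR (- u / 2))%:E < +oo)%E.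
Proof.
have r0 : (0 : R) < 4^-1 by rewrite invr_gt0.
apply: (@le_lt_trans _ _ (\int[mu]_(u in `[1%R, +oo[)
   ((4 * Cb a)%:E * (exponential_pdf 4^-1 u)%:E))%E).
  apply: ge0_le_integral => //.
  - by move=> u _; rewrite lee_fin mulr_ge0 ?powR_ge0 ?expR_ge0.
  - exact: mg.
  - apply/measurable_EFinP; apply: measurable_funM => //.
    apply: (measurable_funS measurableT (@subsetT _ _)).
    exact: measurable_exponential_pdf.
  - move=> u /=; rewrite in_itv /= andbT => u1.
    rewrite -EFinM lee_fin /exponential_pdf patchE mem_set /=; last first.
      by rewrite in_itv /= andbT; lra.
    have -> : - 4^-1 * u = - u / 4 by field.
    have -> : 4 * Cb a * (4^-1 * expR (- u / 4)) = Cb a * expR (- u / 4).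
      by field.
    exact: pow_exp_bound.
apply: (@le_lt_trans _ _ (\int[mu]_(u in setT)
   ((4 * Cb a)%:E * (exponential_pdf 4^-1 u)%:E))%E).
  apply: ge0_subset_integral => //.
  - apply/measurable_EFinP; apply: measurable_funM => //.
    exact: measurable_exponential_pdf.
  - by move=> u _; rewrite -EFinM lee_fin mulr_ge0 ?exponential_pdf_ge0 ?mulr_ge0 ?Cb_ge0 // ltW.
rewrite ge0_integralZl_EFin //; last 3 first.
- by move=> u _; rewrite lee_fin exponential_pdf_ge0 // ltW.
- apply/measurable_EFinP; exact: measurable_exponential_pdf.
- by rewrite mulr_ge0 ?Cb_ge0.
by rewrite integral_exponential_pdf // mule1 ltry.
Qed.

Lemma chi2_fin (nu : R) : 0 < nu ->
  (\int[mu]_(u in `]0%R, +oo[) (chi2_unnorm nu u)%:E < +oo)%E.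
Proof.
move=> nu0; set a := nu / 2 - 1.
have a1 : -1 < a by rewrite /a; lra.
have -> : (`]0%R, +oo[%classic : set R) = `]0%R, 1%R[%classic `|` `[1%R, +oo[%classic.
  apply/seteqP; split => x /=; rewrite !in_itv /= ?andbT.
    by move=> x0; case: (ltP x 1) => x1; [left|right] => //; rewrite x0.
  by case=> [/andP[]//|]; lra.
rewrite ge0_integral_setU //; last 3 first.
- exact: mg.
- by move=> x _; rewrite lee_fin mulr_ge0 ?powR_ge0 ?expR_ge0.
- apply/disj_setPS => x /= [] /[!in_itv] /= /andP[_ h1] h2; lra.
apply: lte_add_pinfty; last exact: tail_fin.
apply: (@le_lt_trans _ _ (\int[mu]_(x in `]0%R, 1%R[) (x `^ a)%:E)%E); last exact: int01_fin.
apply: ge0_le_integral => //.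
- by move=> x _; rewrite lee_fin mulr_ge0 ?powR_ge0 ?expR_ge0.
- exact: mg.
- exact: mpow.
- move=> x /= /[!in_itv] /= /andP[x0 _]; rewrite lee_fin.
  rewrite ler_piMr ?powR_ge0 // expR_le1; lra.
Qed.

Lemma chi2_pos (nu : R) : 0 < nu ->
  (0 < \int[mu]_(u in `]0%R, +oo[) (chi2_unnorm nu u)%:E)%E.
Proof.
move=> nu0; set a := nu / 2 - 1.
have a1 : -1 <= a by rewrite /a; lra.
apply: (@lt_le_trans _ _ (\int[mu]_(u in `[1%R, 2%R]) (cst ((expR (-1) / 2)%:E) u))%E).
  rewrite integral_cst //.
  rewrite [X in (_ * X)%E](_ : _ = 1%E); last first.
    have h := @lebesgue_measure_itv R `[1%R, 2%R].
    rewrite /= lte_fin ltr1n -EFinD (_ : 2 - 1 = 1 :> R) in h; last lra.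
    exact: h.
  by rewrite mule1 lte_fin divr_gt0 ?expR_gt0.
apply: (@le_trans _ _ (\int[mu]_(u in `[1%R, 2%R]) (chi2_unnorm nu u)%:E)%E).
  apply: ge0_le_integral => //.
  - by move=> x _; rewrite lee_fin divr_ge0 ?expR_ge0.
    exact: mg.
  - move=> x /= /[!in_itv] /= /andP[x1 x2]; rewrite lee_fin /chi2_unnorm -/a.
    rewrite [X in _ <= X]mulrC; apply: ler_pM; [exact: expR_ge0|by rewrite invr_ge0| |].
    + by rewrite ler_expR; lra.
    + apply: (@le_trans _ _ (x `^ (-1))); last by apply: ler_powR.
      rewrite powR_inv1; last lra.
      by rewrite -[X in X <= _]invrK lef_pV2 ?posrE ?invr_gt0 //; lra.
apply: ge0_subset_integral => //.
- exact: mg.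
- by move=> x _; rewrite lee_fin mulr_ge0 ?powR_ge0 ?expR_ge0.
- by move=> x /= /[!in_itv] /= /andP[x1 _]; rewrite andbT; lra.
Qed.

Lemma chi2_int1 (nu : R) : 0 < nu ->
  (\int[mu]_(u in `]0%R, +oo[) (chi2_pdf nu u)%:E = 1)%E.
Proof.
move=> nu0.
have Ip := chi2_pos nu nu0; have If := chi2_fin nu nu0.
have C0 : 0 < chi2_const nu by apply: fine_gt0; rewrite Ip If.
have IE : (\int[mu]_(u in `]0%R, +oo[) (chi2_unnorm nu u)%:E)%E = (chi2_const nu)%:E.
  by rewrite fineK // ge0_fin_numE // ltW.
transitivity (\int[mu]_(u in `]0%R, +oo[) ((chi2_const nu)^-1%:E * (chi2_unnorm nu u)%:E))%E.
  by apply: eq_integral => u _; rewrite -EFinM mulrC.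
rewrite ge0_integralZl_EFin //; last 3 first.
- by move=> x _; rewrite lee_fin mulr_ge0 ?powR_ge0 ?expR_ge0.
- exact: mg.
- by rewrite invr_ge0 ltW.
by rewrite IE -EFinM mulVf // gt_eqF.
Qed.

Lemma omega1_t0 (c0 s nu c : R) : 0 < nu ->
  omega1 c0 s nu 0 c = fine (normal_prob c0 s `]- c, c[).
Proof.
move=> nu0; rewrite /omega1.
under eq_integral => u _ do rewrite !mul0r sub0r subr0.
rewrite ge0_integralZr //.
- by rewrite chi2_int1 // mul1e.
- apply/measurable_EFinP; apply: measurable_funM; last exact: measurable_cst.
  have := mg (nu / 2 - 1) `]0%R, +oo[%classic; move/measurable_EFinP.
  exact.
- by move=> u _; rewrite lee_fin divr_ge0 ?mulr_ge0 ?powR_ge0 ?expR_ge0 // fine_ge0 //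
    integral_ge0 // => x _; rewrite lee_fin mulr_ge0 ?powR_ge0 ?expR_ge0.
Qed.


Lemma qform_delta (K : nat) (M : 'M[R]_K) (j : 'I_K) :
  qform M (fun i => (i == j)%:R) = M j j.
Proof.
rewrite /qform (bigD1 j) //= [X in _ + X]big1 => [|i ij]; last first.
  by apply: big1 => l _; rewrite (negbTE ij) !mul0r.
rewrite addr0 (bigD1 j) //= [X in _ + X]big1 => [|l lj]; last by rewrite (negbTE lj) mulr0.
by rewrite eqxx mul1r mulr1 !addr0.
Qed.

Lemma sum_delta (K : nat) (z : 'I_K -> R) (j : 'I_K) :
  \sum_(k < K) (k == j)%:R * z k = z j.
Proof.
rewrite (bigD1 j) //= [X in _ + X]big1 => [|i ij]; last by rewrite (negbTE ij) mul0r.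
by rewrite eqxx mul1r addr0.
Qed.

End Helpers.

Theorem mainTheorem10 (R : realType) (d : measure_display) (Omega : measurableType d)
  (P : probability Omega R) (K : nat) (c0 alpha0 nu2 : R) (Sigma1 : 'M[R]_K)
  (Z : 'I_K -> Omega -> R) (S : 'I_K -> 'I_K -> Omega -> R) (cstar : 'I_K -> R) :
  (2 <= K)%N -> 0 < c0 -> 0 < alpha0 -> alpha0 < 1 / 2 -> 0 < nu2 ->
  posdef Sigma1 ->
  mvnormal0 P Z Sigma1 ->
  (forall i j, measurable_fun setT (S i j)) ->
  wishart P (fun w => \matrix_(i, j) (nu2 * S i j w)) Sigma1 nu2 ->
  indep_vec_mx P Z S ->
  in_AK P Z S Sigma1 nu2 c0 alpha0 (fun _ => 0) cstar ->
  forall k : 'I_K, alpha0 <= omega1 c0 (Num.sqrt (Sigma1 k k)) nu2 0 (cstar k).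
Proof.
move=> K2 c0p a0 ahalf nu0 [Sym PD] [mZ HZ] mS W Ind [_ [cpos [Hsup Heq]]] k.
have sig j : 0 < Sigma1 j j.
  rewrite -qform_delta; apply: PD; exists j; by rewrite eqxx oner_neq0.
have Zdist j A : measurable A ->
    P (Z j @^-1` A) = normal_prob 0 (Num.sqrt (Sigma1 j j)) A.
  move=> mA.
  have ex : exists i : 'I_K, (i == j)%:R != 0 :> R by exists j; rewrite eqxx oner_neq0.
  have := HZ (fun i => (i == j)%:R) ex A mA.
  rewrite qform_delta => <-; congr (P _).
  by apply/funext => w /=; rewrite sum_delta.
have mpre j (a b : R) : measurable (Z j @^-1` `]a, b[%classic).
  by rewrite -[X in measurable X]setTI; apply: mZ.
have bound th : (exists j, c0 <= `|th j|) ->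
    omegaK P Z S th (fun _ => 0) cstar <= omega1 c0 (Num.sqrt (Sigma1 k k)) nu2 0 (cstar k).
  move=> [j hj]; rewrite /omegaK.
  set E := [set w | _].
  have EE : E = \bigcap_(i in [set: 'I_K]) (Z i @^-1` `]- cstar i - th i, cstar i - th i[%classic).
    apply/seteqP; split => w /=.
      move=> h i _; have [h1 h2] := h i; move: h1 h2; rewrite !mul0r sub0r subr0 /= in_itv /= => h1 h2.
      by apply/andP; split; lra.
    move=> h i; have := h i I; rewrite /= in_itv /= !mul0r sub0r subr0 => /andP[h1 h2].
    by split; lra.
  have mE : measurable E.
    rewrite EE; apply: fin_bigcap_measurable; first exact: finite_finset.
    by move=> i _; apply: mpre.
  have sE : E `<=` Z j @^-1` `]- cstar j - th j, cstar j - th j[%classic.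
    by rewrite EE => w /(_ j I).
  apply: (@le_trans _ _ (fine (normal_prob 0 (Num.sqrt (Sigma1 j j)) `]- cstar j - th j, cstar j - th j[))).
    rewrite -Zdist //; apply: fine_le; [exact: fin_num_measure|exact: fin_num_measure|].
    by apply: le_measure => //; rewrite inE.
  have sj0 : Num.sqrt (Sigma1 j j) != 0 by rewrite gt_eqF // sqrtr_gt0.
  have := @normal_cmp R _ (cstar j) c0 (th j) sj0 (cpos j) c0p hj.
  by rewrite -(Heq j k) omega1_t0.
rewrite -Hsup; apply: ge_sup.
  exists (omegaK P Z S (fun _ => c0) (fun _ => 0) cstar).
  exists (fun _ => c0) => //; exists k; rewrite ger0_norm //; exact: ltW.
by move=> x [th hth <-]; exact: bound.
Qed.
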